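(* Let $q$ be a prime power and suppose there exists a linear $(t_i,t_o,s,q)$-AONT with $2\le t_i\le t_o$. Then \[ s\le \frac{(t_o-1)(q^{t_i}-1)}{(t_i-1)(q-1)}.\]
   Context: A linear $(t_i,t_o,s,q)$-AONT is given by an invertible $s\times s$ matrix $M$ over $\mathbb{F}_q$ defining the map $\mathbf{x}\mapsto\mathbf{y}=\mathbf{x}M^{-1}$ on row vectors of $\mathbb{F}_q^s$, such that for every set $I$ of $t_i$ input coordinates and every set $J$ of $s-t_o$ output coordinates, the pair $((x_i)_{i\in I},(y_j)_{j\in J})$ takes every value in $\mathbb{F}_q^{t_i+s-t_o}$ equally often as $\mathbf{x}$ ranges over $\mathbb{F}_q^s$. Equivalently, $M$ is invertible and every $t_o\times t_i$ submatrix of $M$ has rank $t_i$. *)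

(* Defs.v *)
From mathcomp Require Import all_boot all_order all_algebra all_field.
Set Implicit Arguments. Unset Strict Implicit. Unset Printing Implicit Defensive.
Import GRing.Theory Num.Theory.
Local Open Scope ring_scope.

(* A linear (ti, to, s, q)-AONT over a field F: an invertible s x s matrix M
   (the map is x |-> x M^{-1}, so x = y M: rows of M are indexed by output
   coordinates, columns by input coordinates) such that every to x ti
   submatrix of M has rank ti.  A to x ti submatrix is given by injective
   row / column selections f : 'I_to -> 'I_s and g : 'I_ti -> 'I_s
   (reordering rows/columns does not change the rank). *)
Definition linear_AONT (F : fieldType) (ti to s : nat) (M : 'M[F]_s) : Prop :=
  [/\ (0 < ti)%N, (ti <= to)%N, (to <= s)%N,
      M \in unitmx &
      forall (f : 'I_to -> 'I_s) (g : 'I_ti -> 'I_s),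
        injective f -> injective g -> \rank (mxsub f g M) = ti].

(* Main.v *)
Require Import Defs.
From mathcomp Require Import all_boot all_order all_algebra all_field.
From mathcomp Require Import mxabelem zify.
Import GRing.Theory Num.Theory.
Local Open Scope ring_scope.

Lemma nat_aux (n q : nat) : (0 < q)%N -> (n * (q - 1) + 1 <= q ^ n)%N.
Proof.
move=> q0; elim: n => [|n IH]; first by rewrite expn0.
rewrite expnS.
have h1 : (1 <= q ^ n)%N by rewrite expn_gt0 q0.
set x := (q ^ n)%N in IH h1 *. nia.
Qed.

Lemma zeros_bound (F : fieldType) (ti to s : nat) (M : 'M[F]_s)
  (g : 'I_ti -> 'I_s) (u : 'rV[F]_ti) :
  injective g ->
  (forall (f : 'I_to -> 'I_s), injective f -> \rank (mxsub f g M) = ti) ->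
  u != 0 ->
  (#|[set j | u *m (\col_i M j (g i)) == 0%R]| < to)%N.
Proof.
move=> ginj Hr unz; rewrite ltnNge; apply/negP => Hz.
set Z := [set j | _] in Hz.
pose f (k : 'I_to) : 'I_s := @enum_val _ (mem Z) (widen_ord Hz k).
have finj : injective f.
  by move=> a b /enum_val_inj /(congr1 val) /= /val_inj.
have fZ k : f k \in Z by exact: enum_valP.
set N := mxsub f g M.
have rf : row_free N^T by rewrite /row_free mxrank_tr Hr // -{2}(Hr f finj).
have : u *m N^T == 0.
  apply/eqP/matrixP => a k; rewrite !mxE.
  have := fZ k; rewrite inE => /eqP/matrixP/(_ a 0); rewrite !mxE => H.
  rewrite -[RHS]H; apply: eq_bigr => i _; by rewrite !mxE.
by rewrite mulmx_free_eq0 // (negbTE unz).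
Qed.

Lemma ker_count (F : finFieldType) (n : nat) (c : 'cV[F]_n) :
  (#|F| ^ (n - 1) <= 1 + #|[set u : 'rV[F]_n | (u != 0%R) && (u *m c == 0%R)]|)%N.
Proof.
have -> : [set u : 'rV[F]_n | (u != 0) && (u *m c == 0)] = rowg (kermx c) :\ 0.
  by apply/setP => u; rewrite in_setD1 mem_rowg sub_kermx inE.
have : (0 : 'rV[F]_n) \in rowg (kermx c) by rewrite mem_rowg sub0mx.
move=> h; have e := cardsD1 0 (rowg (kermx c)); rewrite h /= in e.
rewrite -e card_rowg mxrank_ker.
apply: leq_pexp2l; first exact: (ltn_trans _ (finNzRing_gt1 F)).
by rewrite leq_sub2l // rank_leq_col.
Qed.

Theorem theoremT1 (F : finFieldType) (ti to s : nat) (M : 'M[F]_s) :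
  (2 <= ti)%N -> (ti <= to)%N -> linear_AONT ti to M ->
  (s%:R : rat) <= ((to - 1) * (#|F| ^ ti - 1))%:R / ((ti - 1) * (#|F| - 1))%:R.
Proof.
move=> ti2 _ [ti0 titos tos _ Hr].
have tis : (ti <= s)%N := leq_trans titos tos.
pose g (i : 'I_ti) : 'I_s := widen_ord tis i.
have ginj : injective g by move=> a b /(congr1 val) /= ab; apply/val_inj.
pose C (j : 'I_s) : 'cV[F]_ti := \col_i M j (g i).
pose Z (u : 'rV[F]_ti) := [set j | u *m C j == 0%R].
pose W (j : 'I_s) := [set u : 'rV[F]_ti | (u != 0) && (u *m C j == 0)].
set q := #|F|.
have q2 : (1 < q)%N := finNzRing_gt1 F.
have B1 : (\sum_(u : 'rV[F]_ti | u != 0%R) #|Z u| <= (q ^ ti - 1) * (to - 1))%N.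
  apply: (@leq_trans (\sum_(u : 'rV[F]_ti | u != 0%R) (to - 1))%N).
    apply: leq_sum => u unz; have := @zeros_bound F ti to s M g u ginj (fun f fi => Hr f g fi ginj) unz.
    move=> h; have h' : (#|Z u| < to)%N by exact: h. lia.
  rewrite sum_nat_const.
  have -> : #|[pred u : 'rV[F]_ti | u != 0]| = #|predC1 (0 : 'rV[F]_ti)| by apply: eq_card.
  by rewrite cardC1 card_mx mul1n -subn1.
have E : (\sum_(u : 'rV[F]_ti | u != 0%R) #|Z u| = \sum_j #|W j|)%N.
  have cZ (u : 'rV[F]_ti) : #|Z u| = (\sum_(j | u *m C j == 0%R) 1)%N by rewrite sum1dep_card.
  have cW (j : 'I_s) : #|W j| = (\sum_(u : 'rV[F]_ti | (u != 0%R) && (u *m C j == 0%R)) 1)%N by rewrite sum1dep_card /Z /W.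
  rewrite (eq_bigr _ (fun u _ => cZ u)) (eq_bigr _ (fun j _ => cW j)).
  by rewrite (exchange_big_dep xpredT).
have B2 : (s * q ^ (ti - 1) <= s + \sum_j #|W j|)%N.
  apply: (@leq_trans (\sum_(j < s) (1 + #|W j|))%N).
    rewrite -[X in (X * _)%N]card_ord -sum_nat_const.
    by apply: leq_sum => j _; apply: ker_count.
  by rewrite big_split /= sum_nat_const card_ord muln1.
have A := nat_aux (ti - 1) q (ltnW q2).
have key : (s * ((ti - 1) * (q - 1)) <= (to - 1) * (q ^ ti - 1))%N.
  have h1 : (s * ((ti - 1) * (q - 1)) + s <= s * q ^ (ti - 1))%N.
    by rewrite -[X in (_ + X)%N]muln1 -mulnDr leq_mul2l A orbT.
  rewrite mulnC; lia.
have D0 : (0 < (ti - 1) * (q - 1))%N by rewrite muln_gt0; apply/andP; split; lia.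
rewrite ler_pdivlMr ?ltr0n // -natrM ler_nat.
exact: key.
Qed.
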